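(* Let $\mathcal{G}$ and $\mathcal{S}$ be the gauge group and stabilizer group of a translation invariant (TI) Pauli topological subsystem code defined on an $L\times L$ torus, and let $\ell_S$ be the stabilizer locality length from property (iii) of the definition. Then for every region $R$ of the torus whose linear size is less than $L-\ell_S$, $$\mathcal{Z}_{\mathcal{P}}(\tilde{\mathcal{S}}_R)\cap\mathcal{P}(R)\ \propto\ \mathcal{G}(R),$$ i.e. every Pauli operator supported in $R$ that commutes with all truncations to $R$ of locally generated stabilizers is, up to a phase, a gauge operator supported in $R$, and conversely.
   Context: Qudits: a qudit of dimension $N$ has basis $|\alpha\rangle$, $\alpha\in\mathbb{Z}_N$, with $X=\sum_\alpha|\alpha+1\rangle\langle\alpha|$, $Z=\sum_\alpha\omega^\alpha|\alpha\rangle\langle\alpha|$, $\omega=e^{2\pi i/N}$; qudit dimensions may be composite. The Pauli group $\mathcal{P}$ consists of all finite products of single-site Pauli operators times phases; the support of a Pauli operator is the set of sites where it acts non-identically. For a group $\mathcal{T}$, $\mathcal{Z}_{\mathcal{P}}(\mathcal{T})$ is its centralizer in $\mathcal{P}$ and $\mathcal{Z}(\mathcal{T})$ its center; ''$\propto$'' means equality up to phases. A subsystem code is given by a gauge group $\mathcal{G}\le\mathcal{P}$ (containing all $U(1)$ phases) and a stabilizer group $\mathcal{S}$ (abelian, containing no nontrivial multiple of the identity) with $\mathcal{Z}(\mathcal{G})\propto\mathcal{S}$. A two-dimensional TI topological subsystem code is a subsystem code on a 2D lattice such that: (i) every translate of a gauge operator is a gauge operator; (ii) $\mathcal{G}$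 has a generating set of operators with support of linear size less than a constant $\ell_G$; (iii) on the infinite plane, $\mathcal{S}$ has a generating set of operators with support of linear size less than a constant $\ell_S$, and $\mathcal{Z}_{\mathcal{P}}(\mathcal{S})\propto\mathcal{G}$. On the torus, $\tilde{\mathcal{S}}\le\mathcal{S}$ denotes the subgroup generated by local stabilizers (those with support of linear size less than $\ell_S$). For a region $R$: $\mathcal{P}(R)$ is the group of Pauli operators supported in $R$; $\mathcal{G}(R)=\mathcal{G}\cap\mathcal{P}(R)$; $\tilde{\mathcal{S}}_R$ is the group of restrictions (truncations) to $R$ of elements of $\tilde{\mathcal{S}}$. *)

(* Defs.v *)
(* Pauli operators are modelled MODULO PHASES as integer
   exponent vectors (X- and Z-exponents of every qudit at every site),
   read modulo the qudit dimension. *)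
From HB Require Import structures.
From mathcomp Require Import all_boot all_order all_algebra.
Set Implicit Arguments. Unset Strict Implicit. Unset Printing Implicit Defensive.
Import Order.TTheory GRing.Theory Num.Theory.
Local Open Scope ring_scope.

(* Each site carries k qudits; qudit j has dimension d j.
   A Pauli operator (mod phase) on site type T assigns to site t, qudit j,
   the exponent of X (b = false) and of Z (b = true):
     P = prod_{t,j} X_{t,j}^{P t j false} Z_{t,j}^{P t j true}. *)
Definition pauli (T : Type) (k : nat) := T -> 'I_k -> bool -> int.

Section Pauli.
Variables (k : nat) (d : 'I_k -> nat).

Definition peq (T : Type) (P Q : pauli T k) : Prop :=
  forall t j b, (P t j b == Q t j b %[mod (d j)%:Z])%Z.

Definition in_supp (T : Type) (P : pauli T k) (t : T) : Prop :=
  exists j b, ~~ ((d j)%:Z %| P t j b)%Z.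

Definition supp_in (T : Type) (P : pauli T k) (R : T -> Prop) : Prop :=
  forall t, in_supp P t -> R t.

Definition gen (T : Type) (A : pauli T k -> Prop) (P : pauli T k) : Prop :=
  exists (n : nat) (c : 'I_n -> int) (h : 'I_n -> pauli T k),
    (forall i, A (h i)) /\
    peq P (fun t j b => \sum_(i < n) c i * h i t j b).

(* commutation phase exponent at one site: P_t Q_t = exp(2 pi i loc) Q_t P_t *)
Definition loc (p q : 'I_k -> bool -> int) : rat :=
  \sum_(j < k) ((p j false * q j true - p j true * q j false)%:~R / (d j)%:R).

Definition site := (int * int)%type.

Definition finsupp (P : pauli site k) : Prop :=
  exists s : seq site, forall t, in_supp P t -> t \in s.

Definition commP (P Q : pauli site k) : Prop :=
  exists s : seq site, uniq s /\ (forall t, in_supp P t -> t \in s) /\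
    (\sum_(t <- s) loc (P t) (Q t)) \is a Num.int.

Definition linlt (m : nat) (A : site -> Prop) : Prop :=
  exists (s : nat) (a b : int), (s < m)%N /\
    forall x y, A (x, y) -> a <= x < a + s%:Z /\ b <= y < b + s%:Z.

Definition placeP (w : nat) (g : nat -> nat -> 'I_k -> bool -> int)
  (a b : int) : pauli site k :=
  fun t j e =>
    if (a <= t.1 < a + w%:Z) && (b <= t.2 < b + w%:Z)
    then g `|t.1 - a|%N `|t.2 - b|%N j e else 0.

Definition tsite (L : nat) := ('I_L * 'I_L)%type.

Definition commT (L : nat) (P Q : pauli (tsite L) k) : Prop :=
  (\sum_(t : tsite L) loc (P t) (Q t)) \is a Num.int.

Definition linltT (L : nat) (m : nat) (A : tsite L -> Prop) : Prop :=
  exists (s : nat) (a b : 'I_L), (s < m)%N /\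
    forall t, A t -> exists u v, [/\ (u < s)%N, (v < s)%N,
       val t.1 = ((a + u) %% L)%N & val t.2 = ((b + v) %% L)%N].

Definition placeT (L : nat) (w : nat) (g : nat -> nat -> 'I_k -> bool -> int)
  (a b : 'I_L) : pauli (tsite L) k :=
  fun t j e =>
    \sum_(u < w) \sum_(v < w)
      (if (val t.1 == ((a + u) %% L)%N) && (val t.2 == ((b + v) %% L)%N)
       then g u v j e else 0).

Definition trunc (L : nat) (R : {set tsite L}) (P : pauli (tsite L) k)
  : pauli (tsite L) k :=
  fun t j e => if t \in R then P t j e else 0.

End Pauli.

Section Code.
Variables (k : nat) (d : 'I_k -> nat) (w m : nat)
  (g : 'I_m -> nat -> nat -> 'I_k -> bool -> int).

Definition gaugeP : pauli site k -> Prop :=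
  gen d (fun P => exists i a b, P = @placeP k w (g i) a b).

Definition stabP (P : pauli site k) : Prop :=
  gaugeP P /\ forall Q, gaugeP Q -> commP d P Q.

Variable (L : nat).

Definition gaugeT : pauli (tsite L) k -> Prop :=
  gen d (fun P => exists i a b, P = @placeT k L w (g i) a b).

Definition stabT (P : pauli (tsite L) k) : Prop :=
  gaugeT P /\ forall Q, gaugeT Q -> commT d P Q.

Definition stabT_loc (lS : nat) : pauli (tsite L) k -> Prop :=
  gen d (fun P => stabT P /\ linltT lS (in_supp d P)).

End Code.

(* Main.v *)
Require Import Defs.
From mathcomp Require Import all_boot all_order all_algebra.
From mathcomp Require Import zify ring.
Set Implicit Arguments. Unset Strict Implicit. Unset Printing Implicit Defensive.
Import Order.TTheory GRing.Theory Num.Theory.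
Local Open Scope ring_scope.


Notation dv d j x := (((d j)%:Z %| x)%Z) (only parsing).

Section Basic.
Variables (k : nat) (d : 'I_k -> nat).
Hypothesis hd : forall j, (1 < d j)%N.


Lemma d_neq0 j : ((d j)%:R : rat) != 0.
Proof. by rewrite pnatr_eq0 -lt0n; apply: leq_trans (hd j). Qed.

Lemma loc_sumr (p : 'I_k -> bool -> int) (I : Type) (r : seq I) (F : I -> 'I_k -> bool -> int) :
  loc d p (fun j b => \sum_(i <- r) F i j b) = \sum_(i <- r) loc d p (F i).
Proof.
rewrite /loc exchange_big /=; apply: eq_bigr => j _.
rewrite -mulr_suml; congr (_ / _).
rewrite -rmorph_sum /=; congr (_ %:~R).
by rewrite !mulr_sumr -sumrB.
Qed.

Lemma loc_scaler (p : 'I_k -> bool -> int) c q :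
  loc d p (fun j b => c * q j b) = c%:~R * loc d p q.
Proof.
rewrite /loc mulr_sumr; apply: eq_bigr => j _.
by rewrite [RHS]mulrA -intrM; congr (_%:~R / _); ring.
Qed.

Lemma loc_ext p q q' : (forall j b, q j b = q' j b) -> loc d p q = loc d p q'.
Proof. by move=> e; apply: eq_bigr => j _; rewrite !e. Qed.

Lemma loc_ext1 p p' q : (forall j b, p j b = p' j b) -> loc d p q = loc d p' q.
Proof. by move=> e; apply: eq_bigr => j _; rewrite !e. Qed.

Lemma loc_anti p q : loc d q p = - loc d p q.
Proof.
rewrite /loc -sumrN; apply: eq_bigr => j _.
by rewrite -[RHS]mulNr -intrN; congr (_%:~R / _); ring.
Qed.

Lemma loc_lin p n (c : 'I_n -> int) h :
  loc d p (fun j b => \sum_(i < n) c i * h i j b) = \sum_(i < n) (c i)%:~R * loc d p (h i).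
Proof.
rewrite loc_sumr; apply: eq_bigr => i _; exact: loc_scaler.
Qed.

Lemma loc_int0 p q : (forall j b, dv d j (q j b)) -> loc d p q \is a Num.int.
Proof.
move=> h; rewrite /loc; apply: rpred_sum => j _.
have [x hx] := dvdzP (h j true); have [y hy] := dvdzP (h j false).
rewrite hx hy !mulrA -mulrBl intrM mulfK ?d_neq0 //.
exact: intr_int.
Qed.

Lemma loc_int0l p q : (forall j b, dv d j (p j b)) -> loc d p q \is a Num.int.
Proof. by move=> h; rewrite loc_anti rpredN loc_int0. Qed.

Lemma loc_sub p q q' : loc d p q - loc d p q' = loc d p (fun j b => q j b - q' j b).
Proof.
rewrite /loc -sumrB; apply: eq_bigr => j _.
by rewrite -mulrBl -intrB; congr (_%:~R / _); ring.
Qed.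

Lemma loc_cong p q q' : (forall j b, dv d j (q j b - q' j b)) ->
  loc d p q - loc d p q' \is a Num.int.
Proof. by move=> h; rewrite loc_sub; apply: loc_int0. Qed.

Lemma loc_congl p p' q : (forall j b, dv d j (p j b - p' j b)) ->
  loc d p q - loc d p' q \is a Num.int.
Proof.
move=> h; rewrite !(loc_anti q) -opprD rpredN; exact: loc_cong.
Qed.

End Basic.


Section Md.
Variables (L : nat).
Hypothesis hL : (0 < L)%N.

Definition md (z : int) : nat := `|(z %% L%:Z)%Z|%N.

Lemma L_neq0 : L%:Z != 0. Proof. apply/eqP; lia. Qed.

Lemma mdE z : (md z)%:Z = (z %% L%:Z)%Z.
Proof. by rewrite /md gez0_abs // modz_ge0 // L_neq0. Qed.

Lemma md_lt z : (md z < L)%N.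
Proof.
have := ltz_pmod z (_ : 0 < L%:Z). rewrite -mdE ltz_nat. apply. by rewrite ltz_nat.
Qed.

Lemma md_nat (n : nat) : md n%:Z = (n %% L)%N.
Proof. by rewrite /md modz_nat. Qed.

Lemma md_eq x y : (md x == md y) = (L%:Z %| y - x)%Z.
Proof.
by rewrite -eqz_nat !mdE -eqz_mod_dvd eq_sym.
Qed.

Lemma md_add (c : int) (u : nat) : md (c + u%:Z) = ((md c + u) %% L)%N.
Proof.
apply/eqP; rewrite -eqz_nat mdE -modz_nat PoszD mdE.
by apply/eqP; rewrite modzDml.
Qed.

Lemma K1 (V : zmodType) (x y : int) (M : nat) (a : V) :
  `|y - x| < (M.+1 * L)%:Z ->
  \sum_(i < (2*M).+1) (if x + L%:Z * (i%:Z - M%:Z) == y then a else 0)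
  = if md x == md y then a else 0.
Proof.
move=> hb; rewrite -big_mkcond /= md_eq.
case: (boolP (L%:Z %| y - x)%Z) => hdv.
- have hq := divzK hdv; set q := ((y - x) %/ L%:Z)%Z in hq.
  have hL' : 0 < L%:Z by rewrite ltz_nat.
  have hqb : -(M%:Z) <= q <= M%:Z.
    rewrite -hq in hb. 
    rewrite PoszM normrM (gtr0_norm hL') ltr_pM2r // in hb.
    lia.
  have hi0 : (absz (q + M%:Z)%R < (2*M).+1)%N by lia.
  rewrite (big_pred1 (Ordinal hi0)) // => i /=.
  apply/eqP/eqP => [h | ->].
    apply: val_inj => /=.
    have : L%:Z * (i%:Z - M%:Z) = q * L%:Z by rewrite hq -h addrAC subrr add0r.
    rewrite mulrC => /mulIf => /(_ L_neq0) e. lia.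
  rewrite /= gez0_abs; last by lia.
  by rewrite addrK mulrC hq addrC subrK.
- rewrite big_pred0 // => i; apply/negbTE/negP => /eqP h.
  move/negP: hdv; apply; rewrite -h addrAC subrr add0r; exact: dvdz_mulr.
Qed.


Lemma decomp (V : zmodType) (f : int -> V) (c : int) (N : nat) z :
  (forall z, f z != 0 -> c <= z < c + N%:Z) ->
  f z = \sum_(u < N) (if z == c + u%:Z then f (c + u%:Z) else 0).
Proof.
move=> hs.
rewrite (eq_bigr (fun u : 'I_N => if z == c + u%:Z then f z else 0)); last first.
  by move=> u _; case: eqP => // ->.
rewrite -big_mkcond /=; case: (boolP (f z == 0)) => [/eqP -> | nz].
  by rewrite big1.
have /andP[h1 h2] := hs z nz.
have hu : (absz (z - c)%R < N)%N by lia.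
rewrite (big_pred1 (Ordinal hu)) // => u /=.
apply/eqP/eqP => [e|->]; first by apply: val_inj => /=; lia.
rewrite /=; lia.
Qed.

Lemma core1 (V : zmodType) (f : int -> V) (c x : int) (N M : nat) :
  (forall z, f z != 0 -> c <= z < c + N%:Z) ->
  (forall u : nat, (u < N)%N -> `|c + u%:Z - x| < (M.+1 * L)%:Z) ->
  \sum_(u < N) (if md x == md (c + u%:Z) then f (c + u%:Z) else 0)
  = \sum_(i < (2*M).+1) f (x + L%:Z * (i%:Z - M%:Z)).
Proof.
move=> hs hb.
rewrite (eq_bigr (fun i : 'I_(2*M).+1 => \sum_(u < N)
   (if x + L%:Z * (i%:Z - M%:Z) == c + u%:Z then f (c + u%:Z) else 0))); last first.
  by move=> i _; apply: decomp.
rewrite exchange_big /=; apply: eq_bigr => u _.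
by rewrite K1 //; apply: hb.
Qed.

Lemma core2 (V : zmodType) (G : int -> int -> V) (c e x y : int) (N M : nat) :
  (forall z w, G z w != 0 -> (c <= z < c + N%:Z) && (e <= w < e + N%:Z)) ->
  (forall u : nat, (u < N)%N -> `|c + u%:Z - x| < (M.+1 * L)%:Z) ->
  (forall u : nat, (u < N)%N -> `|e + u%:Z - y| < (M.+1 * L)%:Z) ->
  \sum_(u < N) \sum_(v < N)
     (if (md x == md (c + u%:Z)) && (md y == md (e + v%:Z))
      then G (c + u%:Z) (e + v%:Z) else 0)
  = \sum_(i < (2*M).+1) \sum_(j < (2*M).+1)
      G (x + L%:Z * (i%:Z - M%:Z)) (y + L%:Z * (j%:Z - M%:Z)).
Proof.
move=> hs hbx hby.
transitivity (\sum_(u < N) (if md x == md (c + u%:Z) then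
   \sum_(v < N) (if md y == md (e + v%:Z) then G (c + u%:Z) (e + v%:Z) else 0)
   else 0)).
  apply: eq_bigr => u _; case: (md x == md (c + u%:Z)) => //=.
  by rewrite big1.
rewrite (@core1 _ (fun z => \sum_(v < N)
   (if md y == md (e + v%:Z) then G z (e + v%:Z) else 0)) c x N M) //; last first.
  move=> z; case: (boolP (c <= z < c + N%:Z)) => // hz nz; exfalso.
  move/eqP: nz; apply; apply: big1 => v _; case: ifP => // _.
  apply/eqP; apply: contraNT hz => /hs /andP[] //.
apply: eq_bigr => i _; rewrite (@core1 _ _ e y N M) //.
move=> w nw; have /andP[] := hs _ _ nw => //.
Qed.

End Md.


Section Wrap.
Variables (k : nat) (d : 'I_k -> nat).
Hypothesis hd : forall j, (1 < d j)%N.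
Variables (L w : nat).
Hypothesis hL : (0 < L)%N.

Definition om (z : int) : 'I_L := Ordinal (md_lt hL z).
Definition piT (p : site) : tsite L := (om p.1, om p.2).

Definition inbox (c e : int) (N : nat) (p : site) : bool :=
  (c <= p.1 < c + N%:Z) && (e <= p.2 < e + N%:Z).

Definition wrapB (c e : int) (N : nat) (F : pauli site k) : pauli (tsite L) k :=
  fun t j b => \sum_(u < N) \sum_(v < N)
    (if (val t.1 == md L (c + u%:Z)) && (val t.2 == md L (e + v%:Z))
     then F (c + u%:Z, e + v%:Z) j b else 0).

Definition wrapW (M : nat) (F : pauli site k) (p : site) : 'I_k -> bool -> int :=
  fun j b => \sum_(i < (2*M).+1) \sum_(i' < (2*M).+1)
    F (p.1 + L%:Z * (i%:Z - M%:Z), p.2 + L%:Z * (i'%:Z - M%:Z)) j b.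

Lemma wrapB_W c e N F M p j b :
  (forall p j b, F p j b != 0 -> inbox c e N p) ->
  (forall u : nat, (u < N)%N -> `|c + u%:Z - p.1| < (M.+1 * L)%:Z) ->
  (forall u : nat, (u < N)%N -> `|e + u%:Z - p.2| < (M.+1 * L)%:Z) ->
  wrapB c e N F (piT p) j b = wrapW M F p j b.
Proof.
move=> hs h1 h2; rewrite /wrapB /wrapW /=.
apply: (@core2 L hL _ (fun z z2 => F (z, z2) j b)) => // z z2 nz.
exact: (hs (z, z2) j b nz).
Qed.

Lemma placeT_B g' (a b : int) t j e :
  placeT w g' (om a) (om b) t j e = wrapB a b w (placeP w g' a b) t j e.
Proof.
rewrite /placeT /wrapB; apply: eq_bigr => u _; apply: eq_bigr => v _.
rewrite /= !md_add //; case: ifP => // _.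
have hu := ltn_ord u; have hv := ltn_ord v.
rewrite /placeP /= ifT; last by apply/andP; split; apply/andP; split; lia.
have -> : (a + u%:Z - a) = u%:Z by ring.
by have -> : (b + v%:Z - b) = v%:Z by ring.
Qed.

Lemma placeP_supp (g' : nat -> nat -> 'I_k -> bool -> int) a b p j e : placeP w g' a b p j e != 0 -> inbox a b w p.
Proof. by rewrite /placeP /inbox; case: ifP. Qed.

Lemma Mbound (M : nat) : (M.+1 <= M.+1 * L)%N.
Proof. by rewrite leq_pmulr. Qed.

Lemma placeT_W g' (a b p1 p2 : int) j e (M : nat) :
  (absz a + absz b + absz p1 + absz p2 + w <= M)%N ->
  placeT w g' (om a) (om b) (piT (p1, p2)) j e = wrapW M (placeP w g' a b) (p1, p2) j e.
Proof.
move=> hM; rewrite placeT_B (@wrapB_W _ _ _ _ M) //.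
- exact: placeP_supp.
- move=> u hu /=; have := Mbound M; set X := (M.+1 * L)%N; lia.
- move=> u hu /=; have := Mbound M; set X := (M.+1 * L)%N; lia.
Qed.

Lemma placeP_shift (g' : nat -> nat -> 'I_k -> bool -> int) a b x y s r :
  placeP w g' a b (x + s, y + r) = placeP w g' (a - s) (b - r) (x, y).
Proof.
rewrite /placeP /=.
have -> : (a <= x + s < a + w%:Z) = (a - s <= x < a - s + w%:Z).
  by apply/idP/idP => h; lia.
have -> : (b <= y + r < b + w%:Z) = (b - r <= y < b - r + w%:Z).
  by apply/idP/idP => h; lia.
have -> : x + s - a = x - (a - s) by ring.
by have -> : y + r - b = y - (b - r) by ring.
Qed.

Lemma piT_nat (t : tsite L) : piT (nat_of_ord t.1 : int, nat_of_ord t.2 : int) = t.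
Proof.
case: t => [t1 t2]; congr pair; apply: val_inj; rewrite /= md_nat modn_small //.
Qed.



Lemma peq_dv (T : Type) (P Q : pauli T k) :
  peq d P Q <-> forall t j b, dv d j (P t j b - Q t j b).
Proof.
by split => h t j b; [rewrite -eqz_mod_dvd; apply: h | rewrite eqz_mod_dvd; apply: h].
Qed.

Lemma gen_peq (T : Type) (A : pauli T k -> Prop) (P Q : pauli T k) :
  gen d A Q -> (forall t j b, dv d j (P t j b - Q t j b)) -> gen d A P.
Proof.
case=> n [c [h [hh /peq_dv hp]]] hPQ; exists n, c, h; split => //.
apply/peq_dv => t j b.
have -> : P t j b - \sum_(i < n) c i * h i t j b
  = (P t j b - Q t j b) + (Q t j b - \sum_(i < n) c i * h i t j b) by ring.
by rewrite rpredD.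
Qed.

Lemma gen1 (T : Type) (A : pauli T k -> Prop) (P : pauli T k) : A P -> gen d A P.
Proof.
move=> hA; exists 1%N, (fun _ => 1), (fun _ => P); split => //.
by apply/peq_dv => t j b; rewrite big_ord1 mul1r subrr dvdz0.
Qed.

Lemma leq_bigsum n (F : 'I_n -> nat) i : (F i <= \sum_(j < n) F j)%N.
Proof. by rewrite (bigD1 i) //= leq_addr. Qed.

Variables (m : nat) (g : 'I_m -> nat -> nat -> 'I_k -> bool -> int).

Lemma gauge_wrap F c e N :
  (forall p j b, F p j b != 0 -> inbox c e N p) ->
  gaugeP d w g F -> @gaugeT k d w m g L (wrapB c e N F).
Proof.
move=> hs [n [cc [h [hh hp]]]].
have : forall i, exists x : 'I_m * int * int, h i = placeP w (g x.1.1) x.1.2 x.2.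
  by move=> i; have [i' [a [b ->]]] := hh i; exists (i', a, b).
case/fin_all_exists => X hX.
set M := (absz c + absz e + N + w + 2 * L +
          \sum_(i < n) (absz (X i).1.2 + absz (X i).2))%N.
exists n, cc, (fun i => placeT w (g (X i).1.1) (om (X i).1.2) (om (X i).2)); split.
  by move=> i; exists (X i).1.1, (om (X i).1.2), (om (X i).2).
apply/peq_dv => t j b.
have hMb := Mbound M.
have ht1 := ltn_ord t.1; have ht2 := ltn_ord t.2.
have E : forall i, placeT w (g (X i).1.1) (om (X i).1.2) (om (X i).2) t j b
                 = wrapW M (h i) (nat_of_ord t.1 : int, nat_of_ord t.2 : int) j b.
  move=> i; rewrite hX -placeT_W ?piT_nat //.
  have := leq_bigsum (fun i => (absz (X i).1.2 + absz (X i).2)%N) i.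
  rewrite /M /=; lia.
under eq_bigr => i _ do rewrite E.
rewrite -{1}(piT_nat t) (@wrapB_W _ _ _ _ M) //; first last.
- move=> u hu /=; set Y := (M.+1 * L)%N in hMb *; rewrite /M in hMb; lia.
- move=> u hu /=; set Y := (M.+1 * L)%N in hMb *; rewrite /M in hMb; lia.
rewrite /wrapW.
have sw : forall (n1 n2 : nat) (G : 'I_n -> 'I_n1 -> 'I_n2 -> int),
    \sum_(i < n) cc i * \sum_(a < n1) \sum_(b0 < n2) G i a b0
    = \sum_(a < n1) \sum_(b0 < n2) \sum_(i < n) cc i * G i a b0.
  move=> n1 n2 G.
  transitivity (\sum_(i < n) \sum_(a < n1) \sum_(b0 < n2) cc i * G i a b0).
    apply: eq_bigr => i _; rewrite mulr_sumr; apply: eq_bigr => a _.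
    by rewrite mulr_sumr.
  rewrite exchange_big; apply: eq_bigr => a _; by rewrite exchange_big.
rewrite sw -sumrB; apply: rpred_sum => i1 _.
rewrite -sumrB; apply: rpred_sum => i2 _.
by move/peq_dv: hp; apply.
Qed.

End Wrap.


Section Comm.
Variables (k : nat) (d : 'I_k -> nat).
Hypothesis hd : forall j, (1 < d j)%N.
Variables (L w : nat).
Hypothesis hL : (0 < L)%N.

Lemma loc_suml (I : Type) (r : seq I) (F : I -> 'I_k -> bool -> int) q :
  loc d (fun j b => \sum_(i <- r) F i j b) q = \sum_(i <- r) loc d (F i) q.
Proof.
rewrite loc_anti loc_sumr -sumrN; apply: eq_bigr => i _.
by rewrite loc_anti opprK.
Qed.

Lemma loc0 q : loc d (fun _ _ => 0) q = 0.
Proof. by rewrite /loc big1 // => j _; rewrite !mul0r. Qed.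

Lemma loc_if (C : bool) X q :
  loc d (fun j b => if C then X j b else 0) q = if C then loc d X q else 0.
Proof. by case: C; [apply: loc_ext1 | apply: loc0]. Qed.

Definition boxsum (c e : int) (N : nat) (F G : pauli site k) : rat :=
  \sum_(u < N) \sum_(v < N) loc d (F (c + u%:Z, e + v%:Z)) (G (c + u%:Z, e + v%:Z)).

Definition commS (P Q : pauli (tsite L) k) : rat :=
  \sum_(t : tsite L) loc d (P t) (Q t).

Lemma commTE P Q : commT d P Q = (commS P Q \is a Num.int).
Proof. by []. Qed.

Lemma collapse c e N (F : pauli site k) (Y : pauli (tsite L) k) :
  commS (@wrapB k L c e N F) Y =
  \sum_(u < N) \sum_(v < N) loc d (F (c + u%:Z, e + v%:Z)) (Y (piT hL (c + u%:Z, e + v%:Z))).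
Proof.
rewrite /commS.
have E : forall t, loc d (@wrapB k L c e N F t) (Y t) =
   \sum_(u < N) \sum_(v < N) (if t == piT hL (c + u%:Z, e + v%:Z)
        then loc d (F (c + u%:Z, e + v%:Z)) (Y t) else 0).
  move=> [t1 t2].
  rewrite /wrapB loc_suml; apply: eq_bigr => u _.
  rewrite loc_suml; apply: eq_bigr => v _.
  rewrite loc_if; congr (if _ then _ else _).
under eq_bigr => t _ do rewrite E.
rewrite exchange_big; apply: eq_bigr => u _.
rewrite exchange_big; apply: eq_bigr => v _.
by rewrite -big_mkcond big_pred1_eq.
Qed.


Lemma om_nat (a : 'I_L) : om hL (nat_of_ord a : int) = a.
Proof. by apply: val_inj; rewrite /= md_nat modn_small. Qed.

Lemma sum4_swap (n1 n2 n3 n4 : nat) (X : 'I_n1 -> 'I_n2 -> 'I_n3 -> 'I_n4 -> rat) :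
  \sum_(a < n1) \sum_(b < n2) \sum_(c < n3) \sum_(e < n4) X a b c e =
  \sum_(c < n3) \sum_(e < n4) \sum_(a < n1) \sum_(b < n2) X a b c e.
Proof.
transitivity (\sum_(a < n1) \sum_(c < n3) \sum_(b < n2) \sum_(e < n4) X a b c e).
  by apply: eq_bigr => a _; rewrite exchange_big.
rewrite exchange_big; apply: eq_bigr => c _.
transitivity (\sum_(a < n1) \sum_(e < n4) \sum_(b < n2) X a b c e).
  by apply: eq_bigr => a _; rewrite exchange_big.
by rewrite exchange_big.
Qed.

Lemma comm_wrap_placeT c e N F (g' : nat -> nat -> 'I_k -> bool -> int) (a b : 'I_L) :
  (forall p j b, F p j b != 0 -> inbox c e N p) ->
  (forall a' b', boxsum c e N F (placeP w g' a' b') \is a Num.int) ->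
  commS (@wrapB k L c e N F) (placeT w g' a b) \is a Num.int.
Proof.
move=> hs hb; rewrite collapse.
set M := (absz c + absz e + 2 * N + a + b + w)%N.
have E : forall u v : 'I_N,
  loc d (F (c + u%:Z, e + v%:Z)) (placeT w g' a b (piT hL (c + u%:Z, e + v%:Z))) =
  \sum_(i < (2*M).+1) \sum_(i' < (2*M).+1)
    loc d (F (c + u%:Z, e + v%:Z))
      (placeP w g' (a%:Z - L%:Z * (i%:Z - M%:Z)) (b%:Z - L%:Z * (i'%:Z - M%:Z))
         (c + u%:Z, e + v%:Z)).
  move=> u v.
  rewrite -{1}(om_nat a) -{1}(om_nat b).
  rewrite (loc_ext _ _ (fun j e0 => placeT_W hL g' j e0 (M := M) _)); last first.
    have := ltn_ord u; have := ltn_ord v; rewrite /M; lia.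
  rewrite /wrapW loc_sumr; apply: eq_bigr => i _.
  rewrite loc_sumr; apply: eq_bigr => i' _.
  by apply: loc_ext => j e0; rewrite /= (@placeP_shift k L w hL).
rewrite (eq_bigr (fun u : 'I_N => \sum_(v < N) \sum_(i < (2*M).+1) \sum_(i' < (2*M).+1)
    loc d (F (c + u%:Z, e + v%:Z))
      (placeP w g' (a%:Z - L%:Z * (i%:Z - M%:Z)) (b%:Z - L%:Z * (i'%:Z - M%:Z))
         (c + u%:Z, e + v%:Z)))); last first.
  by move=> u _; apply: eq_bigr => v _; apply: E.
rewrite sum4_swap; apply: rpred_sum => i _; apply: rpred_sum => i' _.
exact: hb.
Qed.


Lemma commS_anti P Q : commS P Q = - commS Q P.
Proof. by rewrite /commS -sumrN; apply: eq_bigr => t _; rewrite loc_anti. Qed.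

Lemma commS_gen (A : pauli (tsite L) k -> Prop) X Q :
  (forall h, A h -> commS X h \is a Num.int) -> gen d A Q -> commS X Q \is a Num.int.
Proof.
move=> hA [n [c [h [hh /peq_dv hp]]]].
set S := (fun t j b => \sum_(i < n) c i * h i t j b).
have -> : commS X Q = (commS X Q - commS X S) + commS X S by rewrite subrK.
apply: rpredD.
  rewrite /commS -sumrB; apply: rpred_sum => t _; apply: (loc_cong hd) => j b.
  exact: hp.
rewrite /commS.
under eq_bigr => t _ do rewrite (loc_lin _ _ c (fun i => h i t)).
rewrite exchange_big; apply: rpred_sum => i _.
rewrite -mulr_sumr; apply: rpredM; first exact: intr_int.
exact: hA.
Qed.

Lemma notsupp (T : Type) (P : pauli T k) t :
  ~ in_supp d P t -> forall j b, dv d j (P t j b).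
Proof. by move=> h j b; apply/negPn/negP => nd; apply: h; exists j, b. Qed.


Lemma comm_wrap_gauge m (g : 'I_m -> nat -> nat -> 'I_k -> bool -> int) c e N F :
  (forall p j b, F p j b != 0 -> inbox c e N p) ->
  (forall i a' b', boxsum c e N F (placeP w (g i) a' b') \is a Num.int) ->
  forall Q, @gaugeT k d w m g L Q -> commS (@wrapB k L c e N F) Q \is a Num.int.
Proof.
move=> hs hb Q hQ; apply: (commS_gen _ hQ) => h [i [a [b ->]]].
exact: comm_wrap_placeT.
Qed.

End Comm.


Section Seqs.
Variables (k : nat) (d : 'I_k -> nat).
Hypothesis hd : forall j, (1 < d j)%N.

Definition boxseq (c e : int) (N : nat) : seq site :=
  [seq (c + u%:Z, e + v%:Z) | u <- iota 0 N, v <- iota 0 N].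

Lemma boxseq_uniq c e N : uniq (boxseq c e N).
Proof.
apply: allpairs_uniq; try exact: iota_uniq.
move=> [u1 v1] [u2 v2] _ _ /= [] h1 h2.
by congr pair; apply/eqP; rewrite -eqz_nat; apply/eqP; lia.
Qed.

Lemma mem_boxseq c e N p : (p \in boxseq c e N) = inbox c e N p.
Proof.
apply/allpairsP/idP => [[[u v] [/= hu hv ->]] | ].
  move: hu hv; rewrite !mem_iota !add0n => /andP[_ hu] /andP[_ hv].
  rewrite /inbox /=; apply/andP; split; apply/andP; split; lia.
case: p => x y; rewrite /inbox /= => /andP[/andP[h1 h2] /andP[h3 h4]].
exists (absz (x - c)%R, absz (y - e)%R); split => /=; rewrite ?mem_iota; try (apply/andP; split; lia).
congr pair; lia.
Qed.

Lemma sum_boxseq c e N (h : site -> rat) :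
  \sum_(p <- boxseq c e N) h p = \sum_(u < N) \sum_(v < N) h (c + u%:Z, e + v%:Z).
Proof.
rewrite /boxseq big_allpairs_dep /= -(big_mkord xpredT (fun u => \sum_(v < N) h (c + u%:Z, e + v%:Z))).
rewrite /index_iota subn0; apply: eq_bigr => u _.
by rewrite -(big_mkord xpredT (fun v => h (c + u%:Z, e + v%:Z))) /index_iota subn0.
Qed.

Definition insb (F : pauli site k) (t : site) : bool :=
  [exists j, exists b, ~~ ((d j)%:Z %| F t j b)%Z].

Lemma insbP F t : reflect (in_supp d F t) (insb F t).
Proof.
apply: (iffP existsP) => [[j /existsP [b h]] | [j [b h]]]; first by exists j, b.
by exists j; apply/existsP; exists b.
Qed.

Lemma seq_indep (F G : pauli site k) (s1 s2 : seq site) :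
  uniq s1 -> uniq s2 -> (forall t, in_supp d F t -> t \in s1) ->
  (forall t, in_supp d F t -> t \in s2) ->
  \sum_(t <- s1) loc d (F t) (G t) - \sum_(t <- s2) loc d (F t) (G t) \is a Num.int.
Proof.
move=> u1 u2 c1 c2.
have sp : forall s, \sum_(t <- s) loc d (F t) (G t) =
   \sum_(t <- s | insb F t) loc d (F t) (G t) + \sum_(t <- s | ~~ insb F t) loc d (F t) (G t).
  by move=> s; apply: bigID.
rewrite (sp s1) (sp s2).
have -> : \sum_(t <- s1 | insb F t) loc d (F t) (G t) = \sum_(t <- s2 | insb F t) loc d (F t) (G t).
  rewrite -[LHS]big_filter -[RHS]big_filter; apply: perm_big; apply: uniq_perm.
  - exact: filter_uniq.
  - exact: filter_uniq.
  move=> t; rewrite !mem_filter; case: (insbP F t) => h.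
    by rewrite (c1 _ h) (c2 _ h).
  by [].
rewrite opprD addrACA subrr add0r.
have hint : forall s, \sum_(t <- s | ~~ insb F t) loc d (F t) (G t) \is a Num.int.
  move=> s; apply: rpred_sum => t hn; apply: (loc_int0l hd) => j b.
  apply: notsupp => /insbP h; by rewrite h in hn.
by apply: rpredB; apply: hint.
Qed.

Lemma commP_box c e N (F G : pauli site k) :
  (forall t, in_supp d F t -> inbox c e N t) -> commP d F G -> boxsum d c e N F G \is a Num.int.
Proof.
move=> hs [s [us [cs hi]]].
have -> : boxsum d c e N F G = (\sum_(t <- boxseq c e N) loc d (F t) (G t) -
     \sum_(t <- s) loc d (F t) (G t)) + \sum_(t <- s) loc d (F t) (G t).
  by rewrite subrK sum_boxseq.
apply: rpredD => //; apply: seq_indep => //; first exact: boxseq_uniq.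
by move=> t /hs; rewrite mem_boxseq.
Qed.

Lemma box_commP c e N (F G : pauli site k) :
  (forall t, in_supp d F t -> inbox c e N t) -> boxsum d c e N F G \is a Num.int -> commP d F G.
Proof.
move=> hs hb; exists (boxseq c e N); split; first exact: boxseq_uniq.
split; first by move=> t /hs; rewrite mem_boxseq.
by rewrite sum_boxseq.
Qed.

End Seqs.


Lemma dir2 (k : nat) (d : 'I_k -> nat) (hd : forall j, (1 < d j)%N)
  (w m : nat) (g : 'I_m -> nat -> nat -> 'I_k -> bool -> int) (lS L : nat)
  (R : {set tsite L}) (P : pauli (tsite L) k) :
  @gaugeT k d w m g L P -> supp_in d P (fun t => t \in R) ->
  forall Q, @stabT_loc k d w m g L lS Q -> commT d P (trunc R Q).
Proof.
move=> hG hS Q hQ; rewrite commTE.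
have -> : commS d P (trunc R Q) = (commS d P (trunc R Q) - commS d P Q) + commS d P Q.
  by rewrite subrK.
apply: rpredD.
  rewrite /commS -sumrB; apply: rpred_sum => t _; rewrite /trunc.
  case: (boolP (t \in R)) => tR.
    by rewrite (@loc_ext _ _ _ _ (Q t)) ?subrr.

  have hn : forall j b, ((d j)%:Z %| P t j b)%Z.
    by apply: notsupp => /hS; rewrite (negbTE tR).
  by apply: rpredB; apply: (loc_int0l hd).
apply: (commS_gen hd _ hQ) => h [[_ hc] _].
by rewrite commS_anti rpredN -commTE; apply: hc.
Qed.

Section Dir1.
Variables (k : nat) (d : 'I_k -> nat).
Hypothesis hd : forall j, (1 < d j)%N.
Variables (w m : nat) (g : 'I_m -> nat -> nat -> 'I_k -> bool -> int) (lS : nat).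
Hypothesis hSloc : forall P, stabP d w g P ->
     gen d (fun Q => stabP d w g Q /\ linlt lS (in_supp d Q)) P.
Hypothesis hZS : forall P, finsupp d P ->
     ((forall Q, stabP d w g Q -> commP d P Q) <-> gaugeP d w g P).
Variables (L : nat) (R : {set tsite L}) (s : nat) (a0 b0 : 'I_L).
Hypothesis hs : (s < L - lS)%N.
Hypothesis hRb : forall t, t \in R -> exists u v, [/\ (u < s)%N, (v < s)%N,
       val t.1 = ((a0 + u) %% L)%N & val t.2 = ((b0 + v) %% L)%N].
Hypothesis hL : (0 < L)%N.
Variable P : pauli (tsite L) k.
Hypothesis hS : supp_in d P (fun t => t \in R).
Hypothesis hC : forall Q, @stabT_loc k d w m g L lS Q -> commT d P (trunc R Q).

Definition Pl : pauli site k :=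
  fun p j e => if inbox (nat_of_ord a0 : int) (nat_of_ord b0 : int) s p then P (piT hL p) j e else 0.

Lemma Pl_supp p j e : Pl p j e != 0 -> inbox (nat_of_ord a0 : int) (nat_of_ord b0 : int) s p.
Proof. by rewrite /Pl; case: ifP. Qed.

Lemma Pl_insupp p : in_supp d Pl p -> inbox (nat_of_ord a0 : int) (nat_of_ord b0 : int) s p.
Proof.
case=> j [e h]; case: (boolP (inbox _ _ s p)) => // hn; exfalso.
by move: h; rewrite /Pl (negbTE hn) dvdz0.
Qed.

Lemma Pl_R p j e : ~~ (piT hL p \in R) -> ((d j)%:Z %| Pl p j e)%Z.
Proof.
move=> hn; rewrite /Pl; case: ifP => _; last by rewrite dvdz0.
by apply: notsupp => /hS; rewrite (negbTE hn).
Qed.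

Lemma P_wrap t j e : ((d j)%:Z %| P t j e - @wrapB k L a0 b0 s Pl t j e)%Z.
Proof.
case: (boolP (t \in R)) => tR.
  have [u [v [hu hv h1 h2]]] := hRb tR.
  have ep : piT hL ((a0 : int) + (u : int), (b0 : int) + (v : int)) = t.
    case: t h1 h2 {tR} => [t1 t2] /= h1 h2; congr pair; apply: val_inj;
      by rewrite /= -PoszD md_nat.
  rewrite -{2}ep (@wrapB_W _ _ hL _ _ _ _ 0%N) //; first last.
  - move=> u' hu' /=; lia.
  - move=> u' hu' /=; lia.
  - exact: Pl_supp.
  rewrite /wrapW !big_ord1 /= !subrr !mulr0 !addr0.
  rewrite /Pl ifT ?ep ?subrr ?dvdz0 //.
  rewrite /inbox /=; apply/andP; split; apply/andP; split; lia.
apply: rpredB.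
  by apply: notsupp => /hS; rewrite (negbTE tR).
rewrite /wrapB; apply: rpred_sum => u _; apply: rpred_sum => v _.
case: ifP => [/andP [/eqP h1 /eqP h2] | _]; last by rewrite dvdz0.
apply: Pl_R.
have -> : piT hL ((a0 : int) + (u : int), (b0 : int) + (v : int)) = t.
  by case: t {tR} h1 h2 => [t1 t2] /= h1 h2; congr pair; apply: val_inj; rewrite /= -?h1 -?h2.
exact: tR.
Qed.


Lemma claim2 S : stabP d w g S -> linlt lS (in_supp d S) ->
  boxsum d (nat_of_ord a0 : int) (nat_of_ord b0 : int) s Pl S \is a Num.int.
Proof.
move=> hSt [s' [c [e [hs' hbox]]]].
have hbox' : forall p, in_supp d S p -> inbox c e s' p.
  by move=> [x y] /hbox [h1 h2]; rewrite /inbox /= h1 h2.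
pose S' : pauli site k := fun p j b => if inbox c e s' p then S p j b else 0.
have S'_supp : forall p j b, S' p j b != 0 -> inbox c e s' p.
  by move=> p j b; rewrite /S'; case: ifP.
have S'_eq : forall p j b, ((d j)%:Z %| S' p j b - S p j b)%Z.
  move=> p j b; rewrite /S'; case: (boolP (inbox c e s' p)) => hi.
    by rewrite subrr dvdz0.
  by rewrite sub0r rpredN; apply: notsupp => /hbox'; rewrite (negbTE hi).
have hgS' : gaugeP d w g S' by apply: (gen_peq hSt.1) => t j b; exact: S'_eq.
have hbS' : forall i a' b', boxsum d c e s' S' (placeP w (g i) a' b') \is a Num.int.
  move=> i a' b'.
  have hgen : gaugeP d w g (placeP w (g i) a' b') by apply: gen1; exists i, a', b'.
  have hb := commP_box hd hbox' (hSt.2 _ hgen).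
  rewrite -(subrK (boxsum d c e s' S (placeP w (g i) a' b'))
                 (boxsum d c e s' S' (placeP w (g i) a' b'))).
  apply: rpredD => //.
  rewrite /boxsum -sumrB; apply: rpred_sum => u _; rewrite -sumrB; apply: rpred_sum => v _.
  by apply: (loc_congl hd) => j b; exact: S'_eq.
pose X := @wrapB k L c e s' S'.
have hX : @stabT_loc k d w m g L lS X.
  apply: gen1; split; [split|].
  - exact: (gauge_wrap hL S'_supp hgS').
  - by move=> Q hQ; rewrite commTE; exact: (comm_wrap_gauge hd hL S'_supp hbS' hQ).
  - exists s', (om hL c), (om hL e); split => // t ht.
    case: (boolP [exists u : 'I_s', exists v : 'I_s',
       (val t.1 == md L (c + (u : nat)%:Z)) && (val t.2 == md L (e + (v : nat)%:Z))]).
      case/existsP => u /existsP [v /andP [/eqP h1 /eqP h2]].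
      by exists u, v; split => //; rewrite ?h1 ?h2 (md_add hL).
    move=> hn; exfalso; case: ht => j [b hb]; move: hb.
    rewrite /X /wrapB big1 ?dvdz0 // => u _; rewrite big1 // => v _.
    case: ifP => // hc; exfalso; apply: (negP hn).
    by apply/existsP; exists u; apply/existsP; exists v; rewrite hc.
have hPX := hC hX; rewrite commTE in hPX.
have hu := ltn_ord a0; have hv := ltn_ord b0.
case: (boolP ((c < (nat_of_ord a0 : int) + s%:Z) && ((nat_of_ord a0 : int) < c + s'%:Z)
          && (e < (nat_of_ord b0 : int) + s%:Z) && ((nat_of_ord b0 : int) < e + s'%:Z))) => ov.
  have e1 : commS d P (trunc R X) - commS d (@wrapB k L a0 b0 s Pl) (trunc R X) \is a Num.int.
    rewrite /commS -sumrB; apply: rpred_sum => t _; apply: (loc_congl hd) => j b.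
    exact: P_wrap.
  have e2 : commS d (@wrapB k L a0 b0 s Pl) (trunc R X)
            - boxsum d (nat_of_ord a0 : int) (nat_of_ord b0 : int) s Pl S \is a Num.int.
    rewrite (collapse d hL) /boxsum -sumrB; apply: rpred_sum => u _.
    rewrite -sumrB; apply: rpred_sum => v _.
    have hu' := ltn_ord u; have hv' := ltn_ord v.
    rewrite /trunc; case: (boolP (piT hL ((nat_of_ord a0 : int) + (u : nat)%:Z,
                                          (nat_of_ord b0 : int) + (v : nat)%:Z) \in R)) => pR.
      have -> : loc d (Pl ((nat_of_ord a0 : int) + (u : nat)%:Z, (nat_of_ord b0 : int) + (v : nat)%:Z))
          (fun j b => if true then X (piT hL ((nat_of_ord a0 : int) + (u : nat)%:Z,
                                          (nat_of_ord b0 : int) + (v : nat)%:Z)) j b else 0)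
        = loc d (Pl ((nat_of_ord a0 : int) + (u : nat)%:Z, (nat_of_ord b0 : int) + (v : nat)%:Z))
                (S' ((nat_of_ord a0 : int) + (u : nat)%:Z, (nat_of_ord b0 : int) + (v : nat)%:Z)).
        apply: loc_ext => j b /=; rewrite /X (@wrapB_W _ _ hL _ _ _ _ 0%N) //; first last.
        - move=> u' hu'' /=; lia.
        - move=> u' hu'' /=; lia.
        rewrite /wrapW !big_ord1 /= !subrr !mulr0 !addr0 //.
      by apply: (loc_cong hd) => j b; exact: S'_eq.
    apply: rpredB; apply: (loc_int0l hd) => j b; exact: Pl_R.
  have -> : boxsum d (nat_of_ord a0 : int) (nat_of_ord b0 : int) s Pl S =
     commS d P (trunc R X) - (commS d P (trunc R X) - commS d (@wrapB k L a0 b0 s Pl) (trunc R X))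
     - (commS d (@wrapB k L a0 b0 s Pl) (trunc R X)
            - boxsum d (nat_of_ord a0 : int) (nat_of_ord b0 : int) s Pl S) by ring.
  by apply: rpredB => //; apply: rpredB.
rewrite /boxsum; apply: rpred_sum => u _; apply: rpred_sum => v _.
have hu' := ltn_ord u; have hv' := ltn_ord v.
apply: (loc_int0 hd) => j b; apply: notsupp => /hbox'.
rewrite /inbox /= => /andP [/andP[h1 h2] /andP[h3 h4]].
apply: (negP ov); rewrite -!andbA; apply/and4P; split; lia.
Qed.


Lemma claim3 S : stabP d w g S -> commP d Pl S.
Proof.
move=> hSt; apply: (@box_commP _ _ (nat_of_ord a0 : int) (nat_of_ord b0 : int) s).
  exact: Pl_insupp.
have [n [cc [h [hh /peq_dv hp]]]] := hSloc hSt.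
pose Ss : pauli site k := fun p j b => \sum_(i < n) cc i * h i p j b.
rewrite -(subrK (boxsum d (nat_of_ord a0 : int) (nat_of_ord b0 : int) s Pl Ss)
               (boxsum d (nat_of_ord a0 : int) (nat_of_ord b0 : int) s Pl S)).
apply: rpredD.
  rewrite /boxsum -sumrB; apply: rpred_sum => u _; rewrite -sumrB; apply: rpred_sum => v _.
  by apply: (loc_cong hd) => j b; exact: hp.
have -> : boxsum d (nat_of_ord a0 : int) (nat_of_ord b0 : int) s Pl Ss =
   \sum_(i < n) (cc i)%:~R * boxsum d (nat_of_ord a0 : int) (nat_of_ord b0 : int) s Pl (h i).
  rewrite /boxsum.
  transitivity (\sum_(u < s) \sum_(v < s) \sum_(i < n) (cc i)%:~R *
     loc d (Pl ((nat_of_ord a0 : int) + (u : nat)%:Z, (nat_of_ord b0 : int) + (v : nat)%:Z))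
           (h i ((nat_of_ord a0 : int) + (u : nat)%:Z, (nat_of_ord b0 : int) + (v : nat)%:Z))).
    apply: eq_bigr => u _; apply: eq_bigr => v _; exact: loc_lin.
  transitivity (\sum_(u < s) \sum_(i < n) \sum_(v < s) (cc i)%:~R *
     loc d (Pl ((nat_of_ord a0 : int) + (u : nat)%:Z, (nat_of_ord b0 : int) + (v : nat)%:Z))
           (h i ((nat_of_ord a0 : int) + (u : nat)%:Z, (nat_of_ord b0 : int) + (v : nat)%:Z))).
    by apply: eq_bigr => u _; rewrite exchange_big.
  rewrite exchange_big; apply: eq_bigr => i _; rewrite mulr_sumr; apply: eq_bigr => u _.
  by rewrite mulr_sumr.
apply: rpred_sum => i _; apply: rpredM; first exact: intr_int.
by have [hst hl] := hh i; exact: claim2.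
Qed.

Lemma dir1 : @gaugeT k d w m g L P.
Proof.
have hfin : finsupp d Pl.
  by exists (boxseq (nat_of_ord a0 : int) (nat_of_ord b0 : int) s) => t /Pl_insupp; rewrite mem_boxseq.
have hg : gaugeP d w g Pl := (proj1 (hZS hfin)) claim3.
have hw := gauge_wrap hL Pl_supp hg.
by apply: (gen_peq hw) => t j e; exact: P_wrap.
Qed.

End Dir1.

Local Close Scope ring_scope.
Unset Implicit Arguments.

Theorem mainTheorem1
  (k : nat) (d : 'I_k -> nat) (hd : forall j, (1 < d j)%N)
  (w m : nat) (g : 'I_m -> nat -> nat -> 'I_k -> bool -> int)
  (lS : nat)
  (hSloc : forall P, stabP d w g P ->
     gen d (fun Q => stabP d w g Q /\ linlt lS (in_supp d Q)) P)
  (hZS : forall P, finsupp d P ->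
     ((forall Q, stabP d w g Q -> commP d P Q) <-> gaugeP d w g P))
  (L : nat) (R : {set tsite L})
  (hR : linltT (L - lS) (fun t => t \in R)) :
  forall P : pauli (tsite L) k,
    (supp_in d P (fun t => t \in R) /\
       forall Q, @stabT_loc k d w m g L lS Q -> commT d P (trunc R Q))
    <->
    (@gaugeT k d w m g L P /\ supp_in d P (fun t => t \in R)).
Proof.
move=> P; split.
  case=> hS hC; split => //.
  case: hR => s [a0 [b0 [hs hRb]]].
  have hL : (0 < L)%N by case: a0 {hRb} => x hx; apply: leq_ltn_trans hx.
  exact: (dir1 hd hSloc hZS hs hRb hL hS hC).
case=> hG hS; split => //; exact: dir2.
Qed.
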